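(* Let $\phi:\Lambda\to\Gamma$ be an immersion between finite graphs, let $\prec$ be a total order on $V(\Gamma)$, and let $F$ be a finite nonempty subset of $V(\Lambda)$. If $\phi$ has the semi-induced path lifting property (SIPL) for $F$ with respect to $\prec$, then $\phi$ is $F$-surviving.
   Context: All graphs are undirected and simplicial (no loops, no multiple edges). For a graph $\Gamma$, ${\operatorname{Lk}}_\Gamma(v)$ is the set of vertices adjacent to $v$, and $G(\Gamma)$ is the group with generating set $V(\Gamma)$ and relations $[u,v]=1$ whenever $\{u,v\}$ is NOT an edge of $\Gamma$ (the right-angled Artin group on the complement graph). A map of graphs $\phi:\Lambda\to\Gamma$ sends vertices to vertices and adjacent vertices to adjacent vertices; it is an immersion if its restriction to ${\operatorname{Lk}}_\Lambda(v')$ is injective for every $v'\in V(\Lambda)$. A map of graphs induces a homomorphism $\phi^*:G(\Gamma)\to G(\Lambda)$, $\phi^*(v)=\prod_{v'\in\phi^{-1}(v)}v'$ (the identity if the fiber is empty; the factors pairwise commute). Fixing a total order on $V(\Lambda)$, for a word $w$ in $V(\Gamma)^{\pm1}$, $\phi^*(w)$ also denotes the word obtained by replacing each letter $v^{\pm1}$ by the product over $\phi^{-1}(v)$ written in increasing order, resp. its formal inverse. A word is reduced if it has minimal length among words representing the same group element; ${\operatorname{supp}}(w)$ is the set of vertices $v$ such that $v$ or $v^{-1}$ occurs in $w$. In a word $u$ in $G(\Lambda)$, a subword $x^{\pm1}u_1x^{\mp1}$ is an innermost cancellation of $x$ if ${\operatorname{supp}}(u_1)\cap{\operatorname{Lk}}_\Lambda(x)=\emptyset$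 and no letter of $u_1$ equals $x^{\pm1}$. $\phi$ is $v'$-surviving ($v'\in V(\Lambda)$) if for every reduced word $w$ in $G(\Gamma)$ the word $\phi^*(w)$ has no innermost cancellation of $v'$; it is $F$-surviving if it is $v'$-surviving for every $v'\in F$. A path in $\Gamma$ is a tuple $(v_0,\dots,v_k)$ of pairwise distinct vertices with $\{v_i,v_{i+1}\}\in E(\Gamma)$ for all $i$. Given a total order $\prec$ on $V(\Gamma)$, a path $(v_0,\dots,v_k)$ is semi-induced if $\{v_i,v_j\}\notin E(\Gamma)$ whenever $j\ge i+2$ and $v_j\prec v_{i+1}$. A path $(v_0',\dots,v_k')$ in $\Lambda$ is a lift of $(v_0,\dots,v_k)$ if $\phi(v_i')=v_i$ for all $i$. $\phi$ has SIPL for $F\subseteq V(\Lambda)$ (w.r.t. $\prec$) if for every $v'\in F$ and every semi-induced path in $\Gamma$ starting at $\phi(v')$ there is a lift of it to $\Lambda$ starting at $v'$. *)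

(* Defs.v *)
From mathcomp Require Import all_boot.
From Stdlib Require Import Relation_Operators.
Set Implicit Arguments. Unset Strict Implicit. Unset Printing Implicit Defensive.

Definition simple_graph (T : finType) (e : rel T) : Prop :=
  symmetric e /\ irreflexive e.

(* Letters: (v, true) = v, (v, false) = v^{-1}.  Words = seq of letters. *)
Definition letter (T : Type) := (T * bool)%type.
Definition linv (T : Type) (x : letter T) : letter T := (x.1, ~~ x.2).

(* One elementary move in the presentation of G(Gamma) (RAAG on the complement):
   free (de)reduction, or swapping two adjacent letters whose vertices span a
   NON-edge of Gamma. *)
Inductive raag_step (T : finType) (e : rel T) : seq (letter T) -> seq (letter T) -> Prop :=
| rs_del a b x : raag_step e (a ++ x :: linv x :: b) (a ++ b)
| rs_ins a b x : raag_step e (a ++ b) (a ++ x :: linv x :: b)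
| rs_comm a b x y : ~~ e x.1 y.1 -> raag_step e (a ++ x :: y :: b) (a ++ y :: x :: b).

Definition raag_eq (T : finType) (e : rel T) := clos_refl_sym_trans _ (@raag_step T e).

Definition reduced (T : finType) (e : rel T) (w : seq (letter T)) : Prop :=
  forall w', raag_eq e w w' -> size w <= size w'.

Definition graph_map (TL TG : finType) (eL : rel TL) (eG : rel TG) (f : TL -> TG) :=
  forall x y, eL x y -> eG (f x) (f y).

Definition immersion (TL TG : finType) (eL : rel TL) (eG : rel TG) (f : TL -> TG) :=
  graph_map eL eG f /\ forall v, {in [pred u | eL v u] &, injective f}.

(* phi^*(w) as a word, given the total order on V(Lambda) as a listing ordL
   (in increasing order) of all vertices of Lambda. *)
Definition pullback_letter (TL TG : finType) (ordL : seq TL) (f : TL -> TG)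
  (x : letter TG) : seq (letter TL) :=
  let fib := [seq (v', true) | v' <- ordL & f v' == x.1] in
  if x.2 then fib else rev (map (@linv TL) fib).

Definition pullback_word (TL TG : finType) (ordL : seq TL) (f : TL -> TG)
  (w : seq (letter TG)) : seq (letter TL) :=
  flatten (map (pullback_letter ordL f) w).

Definition innermost_cancellation (TL : finType) (eL : rel TL) (u : seq (letter TL)) (x : TL) :=
  exists a u1 b (s : bool),
    u = a ++ (x, s) :: u1 ++ (x, ~~ s) :: b /\
    (forall y, y \in u1 -> ~~ eL x y.1 /\ y.1 != x).

Definition surviving_at (TL TG : finType) (eL : rel TL) (eG : rel TG) (ordL : seq TL)
  (f : TL -> TG) (v : TL) :=
  forall w : seq (letter TG), reduced eG w -> ~ innermost_cancellation eL (pullback_word ordL f w) v.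

Definition F_surviving (TL TG : finType) (eL : rel TL) (eG : rel TG) (ordL : seq TL)
  (f : TL -> TG) (F : {set TL}) :=
  forall v, v \in F -> surviving_at eL eG ordL f v.

(* Paths: a path (v_0,...,v_k) is represented as x :: s with x = v_0;
   vertices pairwise distinct, consecutive vertices adjacent. *)
Definition is_gpath (T : finType) (e : rel T) (x : T) (s : seq T) : bool :=
  uniq (x :: s) && path e x s.

Definition semi_induced (T : finType) (e : rel T) (lt : rel T) (x : T) (s : seq T) : Prop :=
  forall i j, j < size (x :: s) -> i.+2 <= j ->
    lt (nth x (x :: s) j) (nth x (x :: s) i.+1) ->
    ~~ e (nth x (x :: s) i) (nth x (x :: s) j).

Definition strict_total_order (T : finType) (lt : rel T) : Prop :=
  irreflexive lt /\ transitive lt /\ (forall x y, x != y -> lt x y || lt y x).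

Definition SIPL (TL TG : finType) (eL : rel TL) (eG : rel TG) (f : TL -> TG)
  (F : {set TL}) (lt : rel TG) : Prop :=
  forall v', v' \in F -> forall s : seq TG,
    is_gpath eG (f v') s -> semi_induced eG lt (f v') s ->
    exists s' : seq TL, is_gpath eL v' s' /\ map f s' = s.

(* Main.v *)
Require Import Defs.
From mathcomp Require Import all_boot.
From Stdlib Require Import Relation_Operators.
From mathcomp Require Import zify.
Set Implicit Arguments. Unset Strict Implicit. Unset Printing Implicit Defensive.

Lemma eq_cat_split (T : Type) (p q r s : seq T) z :
  p ++ q = r ++ z :: s ->
  (exists p', p = r ++ z :: p' /\ s = p' ++ q) \/
  (exists r', r = p ++ r' /\ q = r' ++ z :: s).
Proof.
elim: p r => [|x p IH] r.
  by rewrite cat0s => H; right; exists r; rewrite H.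
case: r => [|y r].
  by rewrite !cat_cons cat0s; case=> -> <-; left; exists p.
rewrite !cat_cons; case=> -> /IH [[p' [-> ->]]|[r' [-> ->]]].
  by left; exists p'.
by right; exists r'.
Qed.

Lemma flatten_map_split (A B : Type) (g : A -> seq B) w a z c :
  flatten (map g w) = a ++ z :: c ->
  exists w0 x w2 a1 c1, [/\ w = w0 ++ x :: w2, g x = a1 ++ z :: c1,
     a = flatten (map g w0) ++ a1 & c = c1 ++ flatten (map g w2)].
Proof.
elim: w a => [|x w IH] a /=.
  by case: a.
move=> H0; have := eq_cat_split H0; move=> [[p' [H1 H2]]|[r' [H1 H2]]].
  by exists [::], x, w, a, p'.
have [w0 [y [w2 [a1 [c1 [E1 Hg E2 E3]]]]]] := IH _ H2.
exists (x :: w0), y, w2, a1, c1; split => //.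
  by rewrite E1.
by rewrite H1 E2 /= catA.
Qed.

Lemma comm_move (T : finType) (e : rel T) (x : letter T) w1 a b :
  all (fun z : letter T => ~~ e x.1 z.1) w1 ->
  raag_eq e (a ++ x :: w1 ++ b) (a ++ w1 ++ x :: b).
Proof.
elim: w1 a => [|z w1 IH] a /=.
  by move=> _; apply: rst_refl.
move=> /andP [Hz Hall].
apply: (rst_trans _ _ _ (a ++ z :: x :: w1 ++ b)).
  by apply: rst_step; apply: rs_comm.
have := IH (rcons a z) Hall.
by rewrite -!cats1 -!catA.
Qed.

Section PB.
Variables (TL TG : finType) (ordL : seq TL) (f : TL -> TG).
Hypothesis allL : forall v : TL, v \in ordL.
Hypothesis uniqL : uniq ordL.

Lemma mem_pb (y : letter TL) (x : letter TG) :
  y \in pullback_letter ordL f x -> f y.1 = x.1 /\ y.2 = x.2.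
Proof.
case: x => v [|]; rewrite /pullback_letter /=.
  by case/mapP => v' ; rewrite mem_filter => /andP [/eqP H _] ->.
rewrite mem_rev -map_comp.
by case/mapP => v' ; rewrite mem_filter => /andP [/eqP H _] ->.
Qed.

Lemma pb_mem (v' : TL) (x : letter TG) :
  f v' = x.1 -> (v', x.2) \in pullback_letter ordL f x.
Proof.
case: x => v [|] /= H; rewrite /pullback_letter /=.
  by apply/mapP; exists v' => //; rewrite mem_filter H eqxx allL.
rewrite mem_rev -map_comp.
by apply/mapP; exists v' => //; rewrite mem_filter H eqxx allL.
Qed.

Lemma pb_uniq (x : letter TG) : uniq (map fst (pullback_letter ordL f x)).
Proof.
case: x => v [|]; rewrite /pullback_letter /=.
  by rewrite -map_comp map_id filter_uniq.
by rewrite map_rev rev_uniq -!map_comp map_id filter_uniq.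
Qed.
End PB.

Lemma flatten_mem (A B : eqType) (g : A -> seq B) w z y :
  z \in w -> y \in g z -> y \in flatten (map g w).
Proof.
move=> Hz Hy; apply/flattenP; exists (g z) => //; exact: map_f.
Qed.

Theorem theorem3p9 (TL TG : finType) (eL : rel TL) (eG : rel TG) (f : TL -> TG)
  (lt : rel TG) (F : {set TL}) (ordL : seq TL) :
  simple_graph eL -> simple_graph eG ->
  immersion eL eG f ->
  strict_total_order lt ->
  uniq ordL -> (forall v : TL, v \in ordL) ->
  F != set0 ->
  SIPL eL eG f F lt ->
  F_surviving eL eG ordL f F.
Proof.
move=> _ [symG irrG] _ _ uniqL allL _ Hsipl v' Hv' w Hred [a [u1 [b [s [Hu Hu1]]]]].
set g := pullback_letter ordL f in Hu.
have [w0 [x [w' [a1 [c1 [Hw Hgx Ha Hc]]]]]] := flatten_map_split Hu.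
have [Hx1 Hx2] : f v' = x.1 /\ s = x.2.
  by have H := mem_pb (ordL:=ordL) (f:=f) (y:=(v', s)) (x:=x); apply: H; rewrite Hgx mem_cat inE eqxx orbT.
have Hnc1 : (v', ~~ s) \notin c1.
  have := @pb_uniq _ _ ordL f uniqL x; rewrite Hgx map_cat cat_uniq /= => /and3P [_ _ /andP [H _]].
  by apply: contra H => H; apply/mapP; exists (v', ~~ s).
have [[p' [Hp _]]|[u1' [Hu1' Hr]]] := eq_cat_split (esym Hc).
  by move: Hnc1; rewrite Hp mem_cat inE eqxx orbT.
have [w1 [y [w2 [a2 [c2 [Hw' Hgy Ha2 _]]]]]] := flatten_map_split Hr.
have [Hy1 Hy2] : f v' = y.1 /\ ~~ s = y.2.
  by have H := mem_pb (ordL:=ordL) (f:=f) (y:=(v', ~~ s)) (x:=y); apply: H; rewrite Hgy mem_cat inE eqxx orbT.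
case hh : (has (fun z : letter TG => eG (f v') z.1) w1).
  move/hasP: hh => [z zin Hz].
  have Hgp : is_gpath eG (f v') [:: z.1].
    apply/andP; split; last by rewrite /= Hz.
    have Hne : f v' != z.1 by apply/eqP => E; move: Hz; rewrite E irrG.
    by rewrite /= inE Hne.
  have Hsi : semi_induced eG lt (f v') [:: z.1].
    by move=> i j /= Hj Hij; exfalso; move: Hj Hij; case: j => [|[|j]].
  have [s' [Hs' Hmap]] := Hsipl v' Hv' [:: z.1] Hgp Hsi.
  case: s' Hs' Hmap => [|x' t] //; case: t => [|? ?] // Hs' [Hx'].
  have Hin : (x', z.2) \in u1.
    rewrite Hu1' Ha2 mem_cat; apply/orP; right; rewrite mem_cat; apply/orP; left.
    by apply: (flatten_mem zin); apply: (pb_mem allL).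
  have [H1 _] := Hu1 _ Hin.
  by move: Hs'; rewrite /is_gpath /= (negbTE H1) andbF.
move/negbT: hh => hn.
have Hall : all (fun z : letter TG => ~~ eG x.1 z.1) w1.
  by rewrite -Hx1; apply/allP => z zin; apply: contra hn => H; apply/hasP; exists z.
have Heq : raag_eq eG w (w0 ++ w1 ++ w2).
  rewrite Hw Hw'.
  apply: (rst_trans _ _ _ (w0 ++ w1 ++ x :: y :: w2)).
    by apply: comm_move.
  have -> : y = linv x.
    by rewrite /linv -Hx1 -Hx2 Hy1 Hy2 -surjective_pairing.
  rewrite !catA; apply: rst_step; exact: rs_del.
have := Hred _ Heq.
rewrite Hw Hw' !size_cat /= !size_cat /=; lia.
Qed.
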